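(* Let $n,k$ be positive integers with $n\ge k$. The integer $|\mathrm{ls}(n,k)|=|\mathrm{js}_n^k(1)|$ is the number of ordered pairs $(\sigma,\tau)$, where $\sigma$ is a permutation of $[n]_0=\{0,1,\dots,n\}$ with $k$ cycles and $\tau$ is a permutation of $[n]=\{1,\dots,n\}$ with $k$ cycles, such that $1\in\mathrm{Orb}_\sigma(0)$ and $\min\sigma=\min\tau$.
   Context: $\mathrm{js}_n^k(z)$ is defined by $\mathrm{js}_0^0(z)=1$, $\mathrm{js}_n^k(z)=0$ if $k\notin\{1,\dots,n\}$ (for $(n,k)\ne(0,0)$), and $\mathrm{js}_n^k(z)=\mathrm{js}_{n-1}^{k-1}(z)-(n-1)(n-1+z)\mathrm{js}_{n-1}^k(z)$ for $n,k\ge1$. The Legendre-Stirling numbers of the first kind are $\mathrm{ls}(n,k)=\mathrm{js}_n^k(1)$. For a permutation $\sigma$ and $j$ in its domain, $\mathrm{Orb}_\sigma(j)=\{\sigma^\ell(j):\ell\ge1\}$, and $\min(\sigma)=\{j\in[n]:j=\min(\mathrm{Orb}_\sigma(j)\cap[n])\}$ is the set of cyclic minima. *)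

(* Defs.v *)
From mathcomp Require Import all_boot all_order all_algebra all_fingroup.
Set Implicit Arguments. Unset Strict Implicit. Unset Printing Implicit Defensive.
Import GRing.Theory Num.Theory.
Local Open Scope ring_scope.

Fixpoint js (z : int) (n k : nat) : int :=
  match n with
  | 0%N => (k == 0%N)%:R
  | n'.+1 => match k with
             | 0%N => 0
             | k'.+1 => js z n' k' - (n'%:Z * (n'%:Z + z)) * js z n' k
             end
  end.

Definition ls (n k : nat) : int := js 1 n k.

(* [n]_0 = {0,...,n} is 'I_n.+1.  Cyclic minima of sigma on [n]_0:
   those j in [n] = {1..n} minimal in Orb_sigma(j) \cap [n]. *)
Definition cycmin0 (n : nat) (s : {perm 'I_n.+1}) : {set 'I_n.+1} :=
  [set j : 'I_n.+1 | (0 < j)%N &&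
     [forall i in porbit s j, (0 < i)%N ==> (j <= i)%N]].

(* [n] = {1..n} is encoded as 'I_n via i |-> i+1 (= lift ord0 i).
   Cyclic minima of tau, as a subset of {1..n} seen inside 'I_n.+1. *)
Definition cycmin1 (n : nat) (t : {perm 'I_n}) : {set 'I_n.+1} :=
  [set lift ord0 i | i in [set i : 'I_n | [forall x in porbit t i, (i <= x)%N]]].

(* Main.v *)
Require Import Defs.
From mathcomp Require Import all_boot all_order all_algebra all_fingroup.
Set Implicit Arguments. Unset Strict Implicit. Unset Printing Implicit Defensive.
Local Open Scope group_scope.

Lemma porbit_fixed (T : finType) (s : {perm T}) a y :
  s a = a -> (y \in porbit s a) = (y == a).
Proof.
move=> sa; apply/porbitP/eqP => [[i ->]|->]; first by rewrite permX_fix.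
by exists 0; rewrite expg0 perm1.
Qed.

Lemma porbit_eq (T : finType) (s : {perm T}) x y :
  y \in porbit s x -> porbit s y = porbit s x.
Proof. by move=> h; apply/eqP; rewrite eq_porbit_mem. Qed.

Lemma porbit_remove (T : finType) (s2 : {perm T}) (j a x y : T) :
  s2 a = a -> j != a -> x != a ->
  (y \in porbit s2 x) = (y \in porbit (tperm j a * s2)%g x) && (y != a).
Proof.
move=> s2a nja nxa; set s := (tperm j a * s2)%g.
have sE z : s z = s2 (tperm j a z) by rewrite permM.
have sj : s j = a by rewrite sE tpermL.
have sa : s a = s2 j by rewrite sE tpermR.
have s2E z : z != a -> z != j -> s2 z = s z by move=> h1 h2; rewrite sE tpermD // eq_sym.
have noa z : a \notin porbit s2 z -> True by [].
have Onoa : a \notin porbit s2 x.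
  by rewrite porbit_sym porbit_fixed.
have C1 z : z != a -> porbit s (s2 z) = porbit s z.
  move=> nza; apply: porbit_eq; have [->|nzj] := eqVneq z j.
    by rewrite -sa -sj (_ : s (s j) = (s ^+ 2) j) ?mem_porbit // permX.
  by rewrite s2E // -{1}(expg1 s) mem_porbit.
apply/idP/andP => [/porbitP[i ->]|[/porbitP[i ->] nya]].
  split; last first.
    by apply: contra Onoa => /eqP <-; exact: mem_porbit.
  have : (s2 ^+ i) x \in porbit s2 x by exact: mem_porbit.
  elim: i => [|i IH] _; first by rewrite expg0 perm1 porbit_id.
  have hO : (s2 ^+ i) x \in porbit s2 x by exact: mem_porbit.
  have nia : (s2 ^+ i) x != a by apply: contraNneq Onoa => <-.
  rewrite expgSr permM -(porbit_eq (IH hO)) -(C1 _ nia); exact: porbit_id.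
have O2 z : z \in porbit s2 x -> s2 z \in porbit s2 x.
  by move=> hz; rewrite -(porbit_eq hz) -{1}(expg1 s2) mem_porbit.
suff Q : ((s ^+ i) x \in porbit s2 x) ||
         (((s ^+ i) x == a) && (s ((s ^+ i) x) \in porbit s2 x)).
  by case/orP: Q => // /andP[/eqP h _]; rewrite h eqxx in nya.
elim: i {nya} => [|i IH]; first by rewrite expg0 perm1 porbit_id.
rewrite expgSr permM.
case/orP: IH => [hz|/andP[/eqP -> ->]]; last by [].
set z := (s ^+ i) x in hz *.
have nza : z != a by apply: contraNneq Onoa => <-.
have [sza|nsza] := eqVneq (s z) a.
  have zj : z = j by apply: (perm_inj (s := s)); rewrite sza sj.
  by rewrite sza /= sa -zj O2 ?orbT.
have nzj : z != j by apply: contra nsza => /eqP ->; rewrite sj.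
by rewrite orbF -s2E // O2.
Qed.

Definition minset (T : finType) (r : T -> nat) (A : {set T}) (s : {perm T}) : {set T} :=
  [set j in A | [forall i in porbit s j, r j <= r i]].

Lemma minset_step (T : finType) (r : T -> nat) (rinj : injective r) (A : {set T}) a j s2 :
  a \in A -> (forall x, x \in A -> r x <= r a) -> j \in A -> perm_on (A :\ a) s2 ->
  minset r A (tperm j a * s2) =
  if j == a then a |: minset r (A :\ a) s2 else minset r (A :\ a) s2.
Proof.
move=> aA amax jA pA.
have s2a : s2 a = a by apply: (out_perm pA); rewrite !inE eqxx.
have [->|nja] := eqVneq j a.
  rewrite tperm1 mul1g; apply/setP => x; rewrite !inE.
  have [->|nxa] := eqVneq x a; last by [].
  rewrite aA /=; apply/forall_inP => i; rewrite porbit_fixed // => /eqP ->.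
  exact: leqnn.
apply/setP => x; rewrite !inE.
have [->|nxa] := eqVneq x a.
  rewrite /=; apply/negbTE/negP => /andP[_ /forall_inP H].
  have : j \in porbit (tperm j a * s2) a.
    by rewrite porbit_sym; apply/porbitP; exists 1%N; rewrite expg1 permM tpermL.
  move=> /H; rewrite leqNgt ltn_neqAle amax // andbT.
  by rewrite (inj_eq rinj) nja.
have [xA|] := boolP (x \in A); last by [].
rewrite /=; apply/forall_inP/forall_inP => H i hi.
  by apply: H; rewrite (porbit_remove _ s2a nja nxa) in hi; case/andP: hi.
have [->|nia] := eqVneq i a; first by apply: amax.
by apply: H; rewrite (porbit_remove _ s2a nja nxa) hi.
Qed.

Lemma perm_onS (T : finType) (A B : {set T}) (s : {perm T}) :
  A \subset B -> perm_on A s -> perm_on B s.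
Proof. by move=> AB sA; apply: subset_trans AB. Qed.

Lemma card_decomp (T : finType) (A : {set T}) a (F : {perm T} -> bool) :
  a \in A ->
  #|[set s : {perm T} | perm_on A s && F s]| =
  \sum_(j in A) #|[set s2 : {perm T} | perm_on (A :\ a) s2 && F (tperm j a * s2)%g]|.
Proof.
move=> aA.
rewrite -sum1_card (partition_big (fun s : {perm T} => s^-1 a) (mem A)); last first.
  by move=> s; rewrite inE => /andP[pA _]; rewrite /= perm_closed // perm_onV.
apply: eq_bigr => j jA; rewrite sum1dep_card.
rewrite -[RHS](card_imset _ (mulgI (tperm j a))); apply: eq_card => s.
rewrite !inE.
apply/andP/imsetP => [[/andP[pA Fs] /eqP sj]|[s2 hs2 ->]].
  exists (tperm j a * s); last by rewrite tpermKg.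
  rewrite inE tpermKg Fs andbT.
  have sja : s j = a by rewrite -sj permKV.
  apply/subsetP => x; rewrite !inE permM => hx.
  have [xa|nxa] := eqVneq x a.
    by move: hx; rewrite xa tpermR sja eqxx.
  rewrite /=; apply/negPn/negP => xnA.
  have xnj : x != j by apply: contraNneq xnA => ->.
  by move: hx; rewrite tpermD 1?eq_sym // (out_perm pA xnA) eqxx.
move: hs2; rewrite inE => /andP[pA2 Fs2]; split.
  rewrite Fs2 andbT; apply: perm_onM.
    by apply: perm_onS (tperm_on j a); apply/subsetP => x; rewrite !inE => /orP[] /eqP ->.
  by apply: perm_onS pA2; exact: subD1set.
have s2a : s2 a = a by apply: (out_perm pA2); rewrite !inE eqxx.
rewrite invMg tpermV permM; apply/eqP.
have -> : s2^-1 a = a by rewrite -{1}s2a permK.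
by rewrite tpermR.
Qed.

Local Close Scope group_scope.

Lemma minset_sub (T : finType) (r : T -> nat) (A : {set T}) s :
  minset r A s \subset A.
Proof. by apply/subsetP => x; rewrite inE => /andP[]. Qed.

Lemma setU1_eq (T : finType) (a : T) (X M : {set T}) :
  a \notin X -> a \in M -> (a |: X == M) = (X == M :\ a).
Proof.
move=> aX aM; apply/eqP/eqP => [<-|->]; first by rewrite setU1K.
by rewrite setD1K.
Qed.

Lemma count_minset (T : finType) (r : T -> nat) (rinj : injective r) (A M : {set T}) :
  #|[set s : {perm T} | perm_on A s && (minset r A s == M)]| =
  if M \subset A then \prod_(i in A :\: M) #|[set j in A | r j < r i]| else 0.
Proof.
move: {2}#|A| (erefl #|A|) => n; elim: n A M => [|n IH] A M cA.
  have A0 : A = set0 by apply: cards0_eq.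
  have ms s : minset r set0 s = set0 by apply/setP => x; rewrite !inE.
  rewrite A0 subset0; case: eqP => [->|nM].
    rewrite setD0 big_set0; rewrite -[RHS](cards1 (1%g : {perm T})).
    apply: eq_card => s; rewrite !inE ms eqxx andbT.
    apply/idP/eqP => [pA|->]; last exact: perm_on1.
    by apply: perm_on_id pA _; rewrite cards0.
  apply/eqP; rewrite cards_eq0; apply/eqP/setP => s; rewrite !inE ms.
  by rewrite eq_sym (introF eqP nM) andbF.
have [x0 x0A] : exists x0, x0 \in A.
  by apply/set0Pn; rewrite -card_gt0 cA.
have [a aA amax] : exists2 a, a \in A & forall x, x \in A -> r x <= r a.
  by case: (arg_maxnP r x0A) => a aA H; exists a.
have cA' : #|A :\ a| = n by move: cA; rewrite (cardsD1 a) aA add1n => -[].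
set A' := A :\ a.
have E j : j \in A ->
  #|[set s2 : {perm T} | perm_on A' s2 && (minset r A (tperm j a * s2)%g == M)]| =
  if j == a then #|[set s2 : {perm T} | perm_on A' s2 && (a |: minset r A' s2 == M)]|
  else #|[set s2 : {perm T} | perm_on A' s2 && (minset r A' s2 == M)]|.
  move=> jA; case: eqP => [->|/eqP nja]; apply: eq_card => s2; rewrite !inE;
    case pA: (perm_on _ s2) => //=; rewrite minset_step // ?eqxx //.
  by rewrite (negbTE nja).
rewrite (card_decomp _ aA) (bigD1 a aA) /= E // eqxx.
rewrite (eq_bigr (fun _ => #|[set s2 : {perm T} | perm_on A' s2 && (minset r A' s2 == M)]|));
  last by move=> j /andP[jA nja]; rewrite E // (negbTE nja).
rewrite sum_nat_cond_const IH //.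
have cset : #|[set x | (x \in A) && (x != a)]| = n.
  by rewrite -cA'; apply: eq_card => x; rewrite !inE andbC.
rewrite cset.
have cc i : i \in A -> i != a -> #|[set j in A' | r j < r i]| = #|[set j in A | r j < r i]|.
  move=> iA nia; apply: eq_card => j; rewrite !inE.
  have [->|//] := eqVneq j a; by rewrite /= ltnNge amax //; case: (a \in A).
have [aM|naM] := boolP (a \in M).
  have nMA' : (M \subset A') = false.
    by apply/negbTE/negP => /subsetP /(_ a aM); rewrite !inE eqxx.
  rewrite nMA'.
  rewrite muln0 addn0.
  rewrite (eq_card (B := [set s2 : {perm T} | perm_on A' s2 && (minset r A' s2 == M :\ a)])); last first.
    move=> s2; rewrite !inE; case: (perm_on _ s2) => //=; apply: setU1_eq => //.
    by apply: contraT; rewrite negbK => /(subsetP (minset_sub r A' s2)); rewrite !inE eqxx.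
  rewrite IH //.
  have -> : (M :\ a \subset A') = (M \subset A).
    apply/idP/idP => /subsetP h; apply/subsetP => x xM.
      have [->//|nxa] := eqVneq x a.
      by have := h x; rewrite !inE nxa xM => /(_ isT) /andP[].
    by move: xM; rewrite !inE => /andP[nxa /h] ->; rewrite nxa.
  case: (M \subset A) => //.
  rewrite (eq_bigl (fun i => i \in A :\: M)); last first.
    move=> x; rewrite !inE; have [->|//] := eqVneq x a; by rewrite aM.
  apply: eq_bigr => i; rewrite !inE => /andP[niM iA]; apply: cc => //.
  by apply: contraNneq niM => ->.
rewrite (eq_card (B := pred0)); last first.
  move=> s2; rewrite !inE; case: (perm_on _ s2) => //=.
  by apply/negbTE; apply: contra naM => /eqP <-; rewrite setU11.
rewrite card0 add0n.
have -> : (M \subset A') = (M \subset A).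
  apply/idP/idP => /subsetP h; apply/subsetP => x xM.
    by have := h x xM; rewrite !inE => /andP[].
  rewrite !inE h // andbT; by apply: contraNneq naM => <-.
case: (M \subset A); last by rewrite muln0.
have aAM : a \in A :\: M by rewrite !inE naM aA.
rewrite [RHS](bigD1 a aAM) /=.
have -> : #|[set j in A | r j < r a]| = n.
  rewrite -cA'; apply: eq_card => j; rewrite !inE.
  have [->|nja] := eqVneq j a; first by rewrite ltnn andbF.
  case jA: (j \in A) => //=; rewrite ltn_neqAle amax // andbT.
  by rewrite (inj_eq rinj).
congr (_ * _); apply: eq_big => i.
  change (pred_of_set (A :\: M) i) with (i \in A :\: M).
  by rewrite !inE; case: (i == a); rewrite /= ?andbF ?andbT.
rewrite !inE => /andP[niM /andP[nia iA]]; exact: cc.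
Qed.

From mathcomp Require Import zify.

Lemma card_porbits_minset (T : finType) (r : T -> nat) (rinj : injective r) (s : {perm T}) :
  #|porbits s| = #|minset r setT s|.
Proof.
have -> : porbits s = porbit s @: minset r setT s.
  apply/setP => O; apply/imsetP/imsetP => [[x _ ->]|[x _ ->]]; last by exists x.
  case: (arg_minnP r (porbit_id s x)) => m mx mmin.
  exists m; last by rewrite (porbit_eq mx).
  rewrite /minset !inE /=; apply/forall_inP => i; rewrite (porbit_eq mx); exact: mmin.
apply: card_in_imset => x y; rewrite /minset !inE /= => /forall_inP hx /forall_inP hy exy.
apply: rinj; apply/eqP; rewrite eqn_leq hx ?hy //.
  by rewrite -exy porbit_id.
by rewrite exy porbit_id.
Qed.

Lemma card_lt N m : #|[set j : 'I_N | j < m]| = minn m N.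
Proof.
rewrite -sum1dep_card -(big_mkord (fun j => j < m) (fun _ => 1)) big_mkcond /=.
elim: N => [|N IH]; first by rewrite big_geq // minn0.
rewrite big_nat_recr //= IH; case: ifP => h; rewrite ?addn1 ?addn0; lia.
Qed.

Definition r1 (n : nat) (i : 'I_n.+1) : nat := if nat_of_ord i == 0 then 3 else (nat_of_ord i).*2.

Lemma r1_inj n : injective (@r1 n).
Proof.
move=> i j; rewrite /r1 => h; apply: ord_inj; move: h.
by case: (nat_of_ord i =P 0) => hi; case: (nat_of_ord j =P 0) => hj h; lia.
Qed.

Lemma cycmin1_eq n (t : {perm 'I_n}) : cycmin1 t = lift ord0 @: minset (@nat_of_ord n) setT t.
Proof.
apply/setP => x; apply/imsetP/imsetP => -[i hi ->]; exists i => //; move: hi;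
  by rewrite /minset !inE.
Qed.

Lemma ord0_minset n (n0 : 0 < n) (s : {perm 'I_n.+1}) :
  (ord0 \in minset (@r1 n) setT s) = ((inord 1 : 'I_n.+1) \notin porbit s ord0).
Proof.
have vo1 : nat_of_ord (inord 1 : 'I_n.+1) = 1 by rewrite inordK.
rewrite /minset !inE /=; apply/forall_inP/negP => [H /H|H i hi].
  by rewrite /r1 vo1 /=.
rewrite /r1 /=; case: (nat_of_ord i =P 0) => // h0.
have h1 : nat_of_ord i != 1.
  by apply/eqP => h1; apply: H; rewrite (_ : inord 1 = i) //; apply: ord_inj; rewrite vo1 h1.
lia.
Qed.

Lemma cycmin0_minset n (n0 : 0 < n) (s : {perm 'I_n.+1}) :
  (inord 1 : 'I_n.+1) \in porbit s ord0 -> cycmin0 s = minset (@r1 n) setT s.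
Proof.
have vo1 : nat_of_ord (inord 1 : 'I_n.+1) = 1 by rewrite inordK.
move=> h1; apply/setP => j; rewrite /cycmin0 /minset !inE /=.
have [j0|jpos] := posnP j.
  rewrite /=; apply/esym/negbTE/negP => /forall_inP H.
  have j0' : j = ord0 by apply: ord_inj.
  rewrite j0' in H; move: (H _ h1); rewrite /r1 vo1 /=.
  done.
rewrite /=; apply/forall_inP/forall_inP => H i hi.
  rewrite /r1 /=; case: (nat_of_ord i =P 0) => hi0; case: (nat_of_ord j =P 0) => hj0; try lia.
    have i0 : i = ord0 by apply: ord_inj.
    have : (inord 1 : 'I_n.+1) \in porbit s j.
      by rewrite -(porbit_eq (_ : ord0 \in porbit s j)) // -i0.
    move=> /H; rewrite vo1 => /implyP /(_ isT); lia.
  have := H i hi; rewrite lt0n => /implyP; move/eqP: hi0 => -> /(_ isT); lia.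
apply/implyP => ipos; have := H i hi; rewrite /r1 /=.
case: (nat_of_ord i =P 0) => hi0; case: (nat_of_ord j =P 0) => hj0; lia.
Qed.

Lemma stepB n (n0 : 0 < n) (s : {perm 'I_n.+1}) (X : {set 'I_n.+1}) : ord0 \notin X ->
  ((inord 1 : 'I_n.+1) \in porbit s ord0) && (cycmin0 s == X) = (minset (@r1 n) setT s == X).
Proof.
move=> X0; have [h1|h1] := boolP ((inord 1 : 'I_n.+1) \in porbit s ord0).
  by rewrite /= cycmin0_minset.
rewrite /=; apply/esym/negbTE/eqP => hX.
by move: X0; rewrite -hX ord0_minset // h1.
Qed.

Lemma memb n (n0 : 0 < n) k (s : {perm 'I_n.+1}) (t : {perm 'I_n}) :
  [&& #|porbits s| == k, #|porbits t| == k, (inord 1 : 'I_n.+1) \in porbit s ord0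
        & cycmin0 s == cycmin1 t] =
  (#|porbits t| == k) && (minset (@r1 n) setT s == lift ord0 @: minset (@nat_of_ord n) setT t).
Proof.
rewrite cycmin1_eq.
set X := lift ord0 @: _.
have X0 : ord0 \notin X.
  by apply/imsetP => -[i _ /eqP]; rewrite (negbTE (neq_lift _ _)).
case ht: (#|porbits t| == k); last by rewrite /= andbF.
rewrite /= (stepB n0 _ X0).
case hm: (minset (@r1 n) setT s == X); rewrite ?andbF //= andbT.
rewrite (card_porbits_minset (@r1_inj n)) (eqP hm) card_imset; last exact: lift_inj.
by rewrite -(card_porbits_minset (@ord_inj n)).
Qed.

Lemma perm_onT (T : finType) (s : {perm T}) : perm_on setT s.
Proof. by apply/subsetP => x _; rewrite inE. Qed.

Lemma count_t n (Y : {set 'I_n}) :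
  #|[set t : {perm 'I_n} | minset (@nat_of_ord n) setT t == Y]| = \prod_(i in setT :\: Y) (i : nat).
Proof.
have := count_minset (@ord_inj n) setT Y; rewrite subsetT => E.
transitivity #|[set t : {perm 'I_n} | perm_on setT t && (minset (@nat_of_ord n) setT t == Y)]|.
  by apply: eq_card => t; rewrite !inE perm_onT.
rewrite E; apply: eq_bigr => i _; rewrite (eq_card (B := [set j : 'I_n | j < i])); last by move=> j; rewrite !inE.
by rewrite card_lt; apply/minn_idPl; exact: ltnW.
Qed.

Lemma count_s n (X : {set 'I_n.+1}) :
  #|[set s : {perm 'I_n.+1} | minset (@r1 n) setT s == X]| =
  \prod_(i in setT :\: X) #|[set j in [set: 'I_n.+1] | r1 j < r1 i]|.
Proof.
have := count_minset (@r1_inj n) setT X; rewrite subsetT => <-.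
by apply: eq_card => t; rewrite !inE perm_onT.
Qed.

Lemma c1_ord0 n (n0 : 0 < n) : #|[set j in [set: 'I_n.+1] | r1 j < r1 (ord0 : 'I_n.+1)]| = 1.
Proof.
have vo1 : nat_of_ord (inord 1 : 'I_n.+1) = 1 by rewrite inordK.
rewrite -(cards1 (inord 1 : 'I_n.+1)); apply: eq_card => j; rewrite !inE /r1 /=.
rewrite -(inj_eq (@ord_inj _)) vo1.
case: (nat_of_ord j =P 0) => hj; apply/idP/eqP => h; lia.
Qed.

Lemma c1_lift n (i : 'I_n) :
  #|[set j in [set: 'I_n.+1] | r1 j < r1 (lift ord0 i)]| = (0 < i) + i.
Proof.
have b0 m : (0 <= m) + m = m.+1 by [].
rewrite -sum1dep_card big_mkcond big_ord_recl /= !inE /r1 /= /bump !b0 /=.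
congr (_ + _); first by case: (nat_of_ord i) => [|m]; rewrite /=; lia.
rewrite (eq_bigr (fun j : 'I_n => if j < i then 1 else 0)); last first.
  move=> j _; rewrite !inE /= /bump !b0 /=.
  have -> : (j.+1).*2 < (i.+1).*2 = (j < i) by rewrite ltn_double.
  by [].
rewrite -big_mkcond sum1dep_card card_lt; apply/minn_idPl; exact: ltnW.
Qed.

Lemma prod_P n (n0 : 0 < n) (Y : {set 'I_n}) :
  \prod_(i in setT :\: (lift ord0 @: Y)) #|[set j in [set: 'I_n.+1] | r1 j < r1 i]| =
  \prod_(i in setT :\: Y) ((0 < i) + i).
Proof.
rewrite big_mkcond big_ord_recl /=.
have -> : (ord0 : 'I_n.+1) \in setT :\: (lift ord0 @: Y).
  rewrite !inE andbT; apply/imsetP => -[i _ /eqP]; by rewrite (negbTE (neq_lift _ _)).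
rewrite c1_ord0 // mul1n [RHS]big_mkcond; apply: eq_bigr => i _.
by rewrite !inE mem_imset ?c1_lift //; exact: lift_inj.
Qed.

Lemma card_cond (T : finType) (b : bool) (Q : pred T) :
  #|[set x | b && Q x]| = if b then #|[set x | Q x]| else 0.
Proof.
case: b; first by apply: eq_card => x; rewrite !inE.
by apply/eqP; rewrite cards_eq0; apply/eqP/setP => x; rewrite !inE.
Qed.
Import GRing.Theory Num.Theory.
Lemma pinE (T : finType) (S : {set T}) x : pred_of_set.body S x = (x \in S).
Proof. by []. Qed.

Definition G (N : nat) (A : {set 'I_N}) (k : nat) : nat :=
  \sum_(Y : {set 'I_N} | (Y \subset A) && (#|Y| == k)) \prod_(i in A :\: Y) (i * i.+1).

Lemma G_step N (A : {set 'I_N}) a k : a \notin A ->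
  G (a |: A) k.+1 = G A k + a * a.+1 * G A k.+1.
Proof.
move=> aA; rewrite /G [LHS](bigID (fun Y : {set 'I_N} => a \in Y)) /=; congr (_ + _).
  rewrite (reindex_onto (fun Y => a |: Y) (fun Y => Y :\ a)); last first.
    by move=> Y /andP[_ aY]; rewrite setD1K.
  apply: eq_big => Y.
    rewrite setU11 andbT.
    have [aY|naY] := boolP (a \in Y).
      have -> : ((a |: Y) :\ a == Y) = false.
        by apply/negbTE/negP => /eqP h; move: (setD11 a (a |: Y)); rewrite h aY.
      rewrite !andbF; apply/esym/negbTE/negP => /andP[/subsetP /(_ a aY)].
      by rewrite (negbTE aA).
    rewrite setU1K // eqxx andbT cardsU1 naY add1n eqSS; congr (_ && _).
    apply/idP/idP => /subsetP h; apply/subsetP => x xY.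
      have := h x; rewrite !inE xY orbT => /(_ isT) /orP[/eqP xa|//].
      by rewrite -xa xY in naY.
    by move: xY; rewrite !inE => /orP[->|/h ->]; rewrite ?orbT.
  move=> /andP[/andP[/andP[sub _] _] _].
  apply: eq_bigl => i; rewrite !inE negb_or.
  have [->|nia] := eqVneq i a; first by rewrite (negbTE aA) andbF.
  by rewrite /=.
rewrite big_distrr /=; apply: eq_big => Y.
  have [aY|naY] := boolP (a \in Y); first by rewrite andbF; apply/esym/negbTE/negP => /andP[/subsetP /(_ a aY)]; rewrite (negbTE aA).
  rewrite andbT; congr (_ && _).
  apply/idP/idP => /subsetP h; apply/subsetP => x xY.
    have := h x xY; rewrite !inE => /orP[/eqP xa|//].
    by rewrite -xa xY in naY.
  by rewrite !inE h ?orbT.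
move=> /andP[/andP[_ _] naY].
have aD : a \in (a |: A) :\: Y by rewrite !inE eqxx naY.
rewrite (bigD1 a aD) /=; congr (_ * _); apply: eq_bigl => i; rewrite !inE.
have [->|nia] := eqVneq i a; first by rewrite (negbTE aA) !andbF.
by rewrite /= andbT -[LHS]/(i \in (a |: A) :\: Y) !inE (negbTE nia).
Qed.

Lemma G_zero N (A : {set 'I_N}) i0 : i0 \in A -> val i0 = 0 -> G A 0 = 0.
Proof.
move=> i0A v0; rewrite /G (eq_bigl (fun Y => Y == set0)); last first.
  move=> Y; rewrite cards_eq0; case: eqP => [->|_]; rewrite ?andbF ?andbT //; exact: sub0set.
rewrite big_pred1_eq (bigD1 i0) ?inE ?i0A //=.
by rewrite v0.
Qed.

From mathcomp Require Import ring.

Lemma A0_eq N (Y : {set 'I_N}) : (Y \subset [set i : 'I_N | i < 0]) = (Y == set0).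
Proof.
apply/idP/eqP => [/subsetP h|->]; last exact: sub0set.
by apply/setP => x; rewrite inE; apply/negbTE/negP => /h; rewrite inE.
Qed.

Lemma js_G N m k : m <= N ->
  js 1 m k = ((-1) ^+ (m + k) * (G [set i : 'I_N | (i < m)%N] k)%:Z)%R.
Proof.
elim: m k => [|m IH] k mN.
  rewrite /G (eq_bigl (fun Y => (Y == set0) && (k == 0))); last first.
    move=> Y; rewrite A0_eq; case: eqP => [->|] //=; by rewrite cards0 eq_sym.
  case: k => [|k] /=.
    rewrite (eq_bigl (fun Y => Y == set0)); last by move=> Y; rewrite andbT.
    by rewrite big_pred1_eq big_pred0 // => i; rewrite !inE.
  rewrite big_pred0 => [|Y]; last by rewrite andbF.
  by rewrite mulr0.
have mN' : m < N by [].
set a := Ordinal mN'.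
have Ae : [set i : 'I_N | i < m.+1] = a |: [set i : 'I_N | i < m].
  by apply/setP => i; rewrite !inE ltnS leq_eqVlt; congr (_ || _).
have naA : a \notin [set i : 'I_N | i < m] by rewrite inE ltnn.
case: k => [|k].
  rewrite (G_zero (i0 := Ordinal (leq_ltn_trans (leq0n m) mN'))) ?inE //=.
  by rewrite mulr0.
rewrite [LHS]/= !IH ?(ltnW mN') // Ae G_step //.
rewrite !addnS !addSn !exprS PoszD !PoszM /=.
have -> : (m.+1 : int) = ((m : int) + 1)%R by rewrite -addn1 PoszD.
ring.
Qed.

Theorem corollary15 (n k : nat) :
  (0 < k)%N -> (k <= n)%N ->
  `|ls n k|%N =
  #|[set p : {perm 'I_n.+1} * {perm 'I_n} |
      [&& #|porbits p.1| == k, #|porbits p.2| == k,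
          (inord 1 : 'I_n.+1) \in porbit p.1 ord0
        & cycmin0 p.1 == cycmin1 p.2]]|.
Proof.
move=> k0 kn; have n0 : 0 < n by apply: leq_trans kn.
rewrite -sum1dep_card (partition_big (fun p : {perm 'I_n.+1} * {perm 'I_n} => p.2) xpredT) //=.
pose H (Y : {set 'I_n}) := if #|Y| == k then
  #|[set s : {perm 'I_n.+1} | minset (@r1 n) setT s == lift ord0 @: Y]| else 0.
rewrite (eq_bigr (fun t => H (minset (@nat_of_ord n) setT t))); last first.
  move=> t _.
  rewrite (reindex_onto (fun s => (s, t)) (fun p => p.1)) /=; last first.
    by case=> s t' /= /andP[_ /eqP ->].
  rewrite sum1dep_card /H -(card_porbits_minset (@ord_inj n)) -card_cond.
  by apply: eq_card => s; rewrite !inE memb // !eqxx !andbT.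
rewrite (partition_big (fun t => minset (@nat_of_ord n) setT t) xpredT) //=.
rewrite (eq_bigr (fun Y : {set 'I_n} => \prod_(i in setT :\: Y) nat_of_ord i * H Y)); last first.
  move=> Y _; rewrite (eq_bigr (fun _ => H Y)); last by move=> t /eqP ->.
  by rewrite sum_nat_cond_const count_t.
rewrite /ls (js_G _ (leqnn n)) abszMsign /=.
have -> : [set i : 'I_n | (i < n)%N] = setT by apply/setP => i; rewrite !inE ltn_ord.
rewrite /G big_mkcond; apply: eq_bigr => Y _; rewrite subsetT /= /H.
case: (#|Y| == k); last by rewrite muln0.
rewrite count_s prod_P // -big_split; apply: eq_bigr => i _.
by case: (nat_of_ord i) => [|m] //=; rewrite add1n.
Qed.
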